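(* Let $(\mathcal{D}_1,\mathcal{D}_2,\dots)$ be a data stream for which at least one $f\in\mathcal{F}$ is consistent with every $\mathcal{D}_t$. Then: (i) $\mathsf{P}(\mathcal{D}_t)\supseteq\mathsf{P}(\mathcal{D}_{t+1})$ for all $t$; (ii) $\mathsf{P}(\mathcal{D}_\infty):=\left(\bigcap_{k=1}^\infty\mathsf{P}(\mathcal{D}_k)\right)\cap\mathsf{K}$ is non-empty; (iii) if $\theta_t\in\mathsf{P}(\mathcal{D}_t)$ for all $t$ and $\lim_{t\to\infty}\theta_t=\theta_\infty$, then $\theta_\infty\in\mathsf{P}(\mathcal{D}_\infty)$.
   Context: $\mathcal{F}$ is a set of functions $\mathbb{N}\times\mathcal{X}\times\mathcal{U}\to\mathcal{X}$ with compact parametrization $(\mathbb{T},\mathsf{K},d)$: $(\mathsf{K},d)$ compact metric space, $\mathbb{T}:\mathsf{K}\to2^{\mathcal{F}}$, $\mathcal{F}\subseteq\bigcup_\theta\mathbb{T}[\theta]$. A data stream is a sequence $\mathcal{D}_t=(d_1,\dots,d_t)$ of data sets formed from observations $d_i=(t_i,x^+_i,x_i,u_i)$; $f$ is consistent with $\mathcal{D}$ if $x^+=f(t,x,u)$ for all $(t,x^+,x,u)\in\mathcal{D}$. $\mathsf{P}(\mathcal{D})$ is the closure of $\{\theta\in\mathsf{K}:\exists f\in\mathbb{T}[\theta]\text{ consistent with }\mathcal{D}\}$. *)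

(* Defs.v *)
From HB Require Import structures.
From mathcomp Require Import all_boot all_order all_algebra.
From mathcomp Require Import all_classical all_reals all_analysis.
Set Implicit Arguments. Unset Strict Implicit. Unset Printing Implicit Defensive.
Import Order.TTheory GRing.Theory Num.Theory.
Local Open Scope classical_set_scope.

Record obs (X U : Type) := Obs { ob_t : nat; ob_xp : X; ob_x : X; ob_u : U }.

Definition consistent (X U : Type) (f : nat -> X -> U -> X) (D : set (obs X U)) :=
  forall o, D o -> ob_xp o = f (ob_t o) (ob_x o) (ob_u o).

(* The data set D_t = (d_1, ..., d_t) of a data stream d (d 0 is unused;
   the stream is indexed from 1, as in the paper). *)
Definition data_set (X U : Type) (d : nat -> obs X U) (t : nat) : set (obs X U) :=
  [set o | exists2 i : nat, (0 < i <= t)%N & o = d i].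

Definition Pset (K : topologicalType) (X U : Type)
  (T : K -> set (nat -> X -> U -> X)) (D : set (obs X U)) : set K :=
  closure [set th | exists2 f, T th f & consistent f D].

(* Main.v *)
Require Import Defs.
From HB Require Import structures.
From mathcomp Require Import all_boot all_order all_algebra.
From mathcomp Require Import all_classical all_reals all_analysis.
Import Order.TTheory GRing.Theory Num.Theory.
Local Open Scope classical_set_scope.

Lemma Pset_mono (K : topologicalType) (X U : Type)
  (T : K -> set (nat -> X -> U -> X)) (d : nat -> obs X U) (k t : nat) :
  (k <= t)%N -> Pset T (data_set d t) `<=` Pset T (data_set d k).
Proof.
move=> kt; apply: closureS => th [f Tf Hf]; exists f => // o [i /andP[i0 ik] ->].
apply: Hf; exists i => //; rewrite i0 /=; exact: leq_trans ik kt.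
Qed.

Theorem mainTheorem13 (R : realType) (K : metricType R) (X U : Type)
  (F : set (nat -> X -> U -> X)) (T : K -> set (nat -> X -> U -> X))
  (K_compact : compact [set: K])
  (T_in_F : forall th, T th `<=` F)
  (F_cover : F `<=` \bigcup_(th in [set: K]) T th)
  (d : nat -> obs X U)
  (Hcons : exists2 f, F f & forall t, (0 < t)%N -> consistent f (data_set d t)) :
  (forall t, (0 < t)%N -> Pset T (data_set d t.+1) `<=` Pset T (data_set d t)) /\
  (\bigcap_(k in [set k : nat | (0 < k)%N]) Pset T (data_set d k) `&` [set: K]
     !=set0) /\
  (forall (th : nat -> K) (th_inf : K),
     (forall t, (0 < t)%N -> Pset T (data_set d t) (th t)) ->
     th @ \oo --> th_inf ->
     (\bigcap_(k in [set k : nat | (0 < k)%N]) Pset T (data_set d k) `&` [set: K])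
       th_inf).
Proof.
split; first by move=> t _; apply: Pset_mono.
split.
  case: Hcons => f Ff Hf.
  have [th _ Tf] := F_cover f Ff.
  exists th; split => // k /= k0; apply: subset_closure; exists f => //; exact: Hf.
move=> th th_inf Hth cv; split => // k /= k0.
have hc : closed (Pset T (data_set d k)) by rewrite /Pset; exact: closed_closure.
apply: (closed_cvg _ hc _ _ cv).
exists k => // t /= kt.
have kt' : (k <= t)%N by exact: kt.
have HH := @Pset_mono K X U T d k t kt' (th t).
exact: (HH (Hth t (leq_trans k0 kt'))).
Qed.
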